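(* Consider the online instance reservation problem described in the context, with parameters $p>0$, $\alpha\in[0,1)$, $\tau\ge 1$, and let $\beta = 1/(1-\alpha)$. Fix an arbitrary demand sequence $d_1,\dots,d_T$. Let $n_\beta$ be the total number of instances reserved by the deterministic online algorithm $A_\beta$, and let $n_{\mathrm{OPT}}$ be the total number of instances reserved, $\sum_t r^*_t$, by an optimal offline solution $(o^*_t, r^*_t)$ of the problem for this demand sequence. Then $n_\beta \le n_{\mathrm{OPT}}$.
   Context: Instance reservation problem: time is slotted $t=1,2,\dots,T$. At each time $t$ a demand $d_t\in\{0,1,2,\dots\}$ (number of instances needed) arrives; set $d_t=0$ for $t\le 0$. A user chooses integers $o_t\ge 0$ (on-demand instances used at $t$) and $r_t\ge 0$ (instances newly reserved at $t$; $r_t=0$ for $t\le 0$), subject to $o_t+\sum_{i=t-\tau+1}^{t} r_i\ge d_t$ for all $t$, where $\tau$ is the reservation period. The reservation fee is normalized to $1$, the on-demand hourly rate is $p$ (the paper assumes throughout $p\ll 1$), and reserved instances run at discounted rate $\alpha p$ with $\alpha\in[0,1]$. The total cost is $C=\sum_{t=1}^T\big(o_t p + r_t + \alpha p(d_t-o_t)\big)$. The optimal offline solution (OPT) minimizes $C$ knowing the whole sequence $d_1,\dots,d_T$ in advance; an online algorithm chooses $o_t,r_t$ knowing only $d_1,\dots,d_t$. Algorithm $A_z$ (for a threshold $z\ge 0$): maintain integers $x_i$ for all integers $i$, initially $x_i=0$. At each time $t$, upon arrival of $d_t$: while $p\cdot\big|\{i: t-\tau+1\le i\le t,\ d_i>x_i\}\big|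 > z$, do: increase $r_t$ by $1$; increase $x_i$ by $1$ for $i=t,\dots,t+\tau-1$; increase $x_i$ by $1$ for $i=t-\tau+1,\dots,t-1$ (a ''phantom'' reservation). After the loop, set $o_t=\max\{d_t-x_t,0\}$. $A_\beta$ denotes $A_z$ with $z=\beta=1/(1-\alpha)$. *)

(* Defs.v *)
From mathcomp Require Import all_boot all_order all_algebra.
Set Implicit Arguments. Unset Strict Implicit. Unset Printing Implicit Defensive.
Import Order.TTheory GRing.Theory Num.Theory.
Local Open Scope ring_scope.

(* Time slots are 1, 2, ..., T (naturals); demands d : nat -> nat, only
   d 1 .. d T are used (d_t = 0 for t <= 0 is encoded by restricting all
   windows to indices i >= 1). tau >= 1 is the reservation period. *)

Section Inst.
Variable R : realFieldType.

Definition active (tau : nat) (r : nat -> nat) (t : nat) : nat :=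
  (\sum_(t.+1 - tau <= i < t.+1 | (0 < i)%N) r i)%N.

Definition feasible (T tau : nat) (d o r : nat -> nat) : Prop :=
  forall t : nat, (1 <= t <= T)%N -> (d t <= o t + active tau r t)%N.

Definition cost (T : nat) (p alpha : R) (d o r : nat -> nat) : R :=
  \sum_(1 <= t < T.+1)
     ((o t)%:R * p + (r t)%:R + alpha * p * ((d t)%:R - (o t)%:R)).

Definition optimal (T tau : nat) (p alpha : R) (d o r : nat -> nat) : Prop :=
  feasible T tau d o r /\
  forall o' r' : nat -> nat, feasible T tau d o' r' ->
    cost T p alpha d o r <= cost T p alpha d o' r'.

Definition n_reserved (T : nat) (r : nat -> nat) : nat :=
  (\sum_(1 <= t < T.+1) r t)%N.

(* |{ i : t - tau + 1 <= i <= t, d_i > x_i }|  (indices i <= 0 never count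
   since d_i = 0 there) *)
Definition uncovered (tau : nat) (d x : nat -> nat) (t : nat) : nat :=
  (\sum_(t.+1 - tau <= i < t.+1 | (0 < i)%N) (x i < d i)%N)%N.

(* one (real + phantom) reservation at time t: x_i += 1 for
   i = t - tau + 1, ..., t + tau - 1 *)
Definition bump (tau : nat) (x : nat -> nat) (t : nat) : nat -> nat :=
  fun i => (x i + (t.+1 - tau <= i < t + tau))%N.

(* the while loop at time t, run with [fuel] as an iteration bound;
   returns the final x and the number r_t of iterations performed *)
Fixpoint loop (fuel : nat) (tau : nat) (p z : R) (d : nat -> nat)
  (x : nat -> nat) (t : nat) : (nat -> nat) * nat :=
  match fuel with
  | 0 => (x, 0%N)
  | f.+1 =>
      if z < p * (uncovered tau d x t)%:R then
        let xk := loop f tau p z d (bump tau x t) t in (xk.1, xk.2.+1)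
      else (x, 0%N)
  end.

(* A fuel that is always sufficient: after (max of the demands) iterations
   every x_i in the window is >= d_i, so the loop condition
   p * 0 > z fails (z >= 0). *)
Definition fuel (T : nat) (d : nat -> nat) : nat :=
  (\sum_(1 <= i < T.+1) d i).+1.

Fixpoint run (T tau : nat) (p z : R) (d : nat -> nat) (t : nat)
  : (nat -> nat) * nat :=
  match t with
  | 0 => (fun _ => 0%N, 0%N)
  | s.+1 =>
      let st := run T tau p z d s in
      let lr := loop (fuel T d) tau p z d st.1 s.+1 in
      (lr.1, (st.2 + lr.2)%N)
  end.

Definition n_alg (T tau : nat) (p z : R) (d : nat -> nat) : nat :=
  (run T tau p z d T).2.

End Inst.

(* Main.v *)
Require Import Defs.
From mathcomp Require Import all_boot all_order all_algebra.
From mathcomp Require Import zify ring lra.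
Import Order.TTheory GRing.Theory Num.Theory.

Definition Qs (r : nat -> nat) (m : nat) : nat := \sum_(0 <= j < m | 0 < j) r j.

Lemma Qs_mono r a b : a <= b -> Qs r a <= Qs r b.
Proof.
move=> ab; rewrite /Qs (big_cat_nat (leq0n a) ab) /=; exact: leq_addr.
Qed.

Lemma Qs_split tau r i : Qs r i.+1 = Qs r (i.+1 - tau) + active tau r i.
Proof.
by rewrite /Qs /active (big_cat_nat (leq0n (i.+1 - tau)) (leq_subr _ _)).
Qed.

Lemma sum_ind a b s (P : pred nat) : a <= s < b ->
  \sum_(a <= j < b | P j) (j == s : nat) = P s.
Proof.
move=> /andP[hs sb]; rewrite big_mkcond /=.
rewrite (big_cat_nat hs (ltnW sb)) (big_cat_nat (leqnSn s) sb) /= big_nat1 eqxx.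
rewrite big_nat_cond big1; last first.
  move=> j /andP[/andP[_ js] _]; case: (P j) => //; rewrite (ltn_eqF js) //.
rewrite add0n big_nat_cond big1; last first.
  move=> j /andP[/andP[js _] _]; case: (P j) => //; rewrite gtn_eqF //.
by case: (P s).
Qed.

Lemma sum_window a b N (P : pred nat) (F : nat -> nat) : a <= b -> b <= N ->
  \sum_(a <= i < b | P i) F i = \sum_(0 <= i < N | (a <= i < b) && P i) F i.
Proof.
move=> ab bN.
rewrite (big_cat_nat (leq0n a) (leq_trans ab bN)) (big_cat_nat ab bN) /=.
rewrite [X in _ = X + _]big_nat_cond [X in _ = X + _]big1; last first.
  by move=> j /andP[/andP[_ ja] /andP[/andP[aj _] _]]; move: ja aj; lia.
rewrite [X in _ = _ + (_ + X)]big_nat_cond [X in _ = _ + (_ + X)]big1; last first.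
  by move=> j /andP[/andP[bj _] /andP[/andP[_ jb] _]]; move: jb bj; lia.
rewrite add0n addn0; apply: congr_big_nat => // j /andP[aj jb].
by rewrite aj jb.
Qed.

Definition Inv tau r t (x : nat -> nat) n :=
  n <= Qs r t.+1 /\ forall i, t < i + tau -> n <= x i + Qs r (i.+1 - tau).

Local Open Scope ring_scope.

Lemma key (R : realFieldType) (p alpha : R) tau T d o r t x n :
  0 < p -> 0 <= alpha -> alpha < 1 -> (1 <= tau)%N ->
  optimal T tau p alpha d o r -> (1 <= t <= T)%N -> Inv tau r t x n ->
  (1 - alpha)^-1 < p * (uncovered tau d x t)%:R -> (n.+1 <= Qs r t.+1)%N.
Proof.
move=> p0 a0 a1 tau1 [feas opt] /andP[t1 tT] [Hn Hx] Hz.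
rewrite ltnNge; apply/negP => Hle.
pose delta i := [&& (t.+1 - tau <= i)%N, (i < t.+1)%N, (0 < i)%N & (x i < d i)%N].
have FA : forall i, delta i -> (active tau r i < d i)%N.
  move=> i /and4P[h1 h2 h3 h4].
  have := Hx i; have := Qs_split tau r i; have := Qs_mono r (i.+1) (t.+1).
  move: h1 h2 h3 h4 Hle; lia.
have FB : forall i, delta i -> (1 <= o i)%N.
  move=> i di; have := FA i di; have /and4P[_ h2 h3 _] := di.
  have := feas i; move: h2 h3 tT; lia.
pose s0 := maxn 1 (t.+1 - tau).
pose o' i := (o i - delta i)%N.
pose r' j := (r j + (j == s0))%N.
have feas' : feasible T tau d o' r'.
  move=> i hi; have := feas i hi.
  have -> : active tau r' i = (active tau r i + \sum_(i.+1 - tau <= j < i.+1 | (0 < j)%N) (j == s0 : nat))%N.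
    by rewrite /active big_split.
  rewrite /o'; case di: (delta i).
    rewrite sum_ind; last first.
      by move: di => /and4P[h1 h2 h3 _]; rewrite /s0; move: h1 h2 h3; lia.
    have := FB i di; rewrite /s0; lia.
  lia.
have := opt o' r' feas'.
have Hc : cost T p alpha d o r = cost T p alpha d o' r' +
    \sum_(1 <= i < T.+1) ((delta i)%:R * ((1 - alpha) * p) - ((i == s0) : nat)%:R).
  rewrite /cost -big_split /=; apply: eq_big_nat => i hi.
  have -> : (o i)%:R = (o' i)%:R + (delta i)%:R :> R.
    rewrite -natrD; congr (_%:R); rewrite /o'; case di: (delta i) => /=.
      by have := FB i di; lia.
    by rewrite subn0 addn0.
  rewrite /r' natrD; ring.
have Hs : \sum_(1 <= i < T.+1) ((delta i)%:R * ((1 - alpha) * p) - ((i == s0) : nat)%:R)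
   = (uncovered tau d x t)%:R * ((1 - alpha) * p) - 1 :> R.
  rewrite sumrB -mulr_suml -!natr_sum.
  rewrite (@sum_ind 1 T.+1 s0 xpredT) /=; last by rewrite /s0; move: t1 tT tau1; lia.
  congr (_%:R * _ - _).
  rewrite /uncovered (@sum_window (t.+1 - tau) t.+1 T.+1); last 2 first.
    exact: leq_subr.
    by [].
  rewrite [RHS]big_mkcond [RHS]big_ltn //= andbF add0n.
  apply: eq_big_nat => i hi; rewrite /delta.
  by case: (t.+1 - tau <= i)%N; case: (i < t.+1)%N; case: (0 < i)%N.
rewrite Hc Hs => H.
have h1 : 0 < 1 - alpha by lra.
have : 1 < (1 - alpha) * (p * (uncovered tau d x t)%:R).
  have : (1 - alpha) * (1 - alpha)^-1 < (1 - alpha) * (p * (uncovered tau d x t)%:R).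
    by rewrite ltr_pM2l.
  by rewrite mulfV ?lt0r_neq0.
nra.
Qed.

Lemma bump_inv tau r t x n : Inv tau r t x n -> (n.+1 <= Qs r t.+1)%N ->
  Inv tau r t (Defs.bump tau x t) n.+1.
Proof.
move=> [Hn Hx] Hn1; split=> // i hi; rewrite /Defs.bump.
have := Hx i hi.
case: (ltnP i (t + tau)) => hit.
  have -> : (t.+1 - tau <= i)%N by move: hi; lia.
  by move=> h; rewrite /=; lia.
have := @Qs_mono r t.+1 (i.+1 - tau).
move: hit Hn1; lia.
Qed.

Lemma loop_inv (R : realFieldType) (p alpha : R) tau T d o r t :
  0 < p -> 0 <= alpha -> alpha < 1 -> (1 <= tau)%N ->
  optimal T tau p alpha d o r -> (1 <= t <= T)%N ->
  forall f x n, Inv tau r t x n ->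
  Inv tau r t (loop f tau p (1 - alpha)^-1 d x t).1
              (n + (loop f tau p (1 - alpha)^-1 d x t).2)%N.
Proof.
move=> p0 a0 a1 tau1 hopt ht; elim=> [|f IH] x n Hi /=.
  by rewrite addn0.
case: ifP => hz /=; last by rewrite addn0.
have hn := @key _ _ _ _ _ _ _ _ _ _ _ p0 a0 a1 tau1 hopt ht Hi hz.
have := IH _ _ (@bump_inv _ _ _ _ _ Hi hn).
by rewrite addSnnS.
Qed.

Lemma run_inv (R : realFieldType) (p alpha : R) tau T d o r :
  0 < p -> 0 <= alpha -> alpha < 1 -> (1 <= tau)%N ->
  optimal T tau p alpha d o r ->
  forall t, (t <= T)%N -> Inv tau r t (run T tau p (1 - alpha)^-1 d t).1
                                     (run T tau p (1 - alpha)^-1 d t).2.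
Proof.
move=> p0 a0 a1 tau1 hopt; elim=> [|s IH] hs.
  by split=> // i _; rewrite /Qs.
rewrite [run _ _ _ _ _ _]/run -/run.
apply: (@loop_inv _ _ _ _ _ _ _ _ _ p0 a0 a1 tau1 hopt); first by move: hs; lia.
have [Hn Hx] := IH (ltnW hs).
split.
  by apply: (leq_trans Hn); apply: Qs_mono.
by move=> i hi; apply: Hx; move: hi; lia.
Qed.

Theorem lemma2 (R : realFieldType) (p alpha : R) (tau T : nat) (d : nat -> nat)
  (o_opt r_opt : nat -> nat) :
  0 < p -> 0 <= alpha -> alpha < 1 -> (1 <= tau)%N ->
  optimal T tau p alpha d o_opt r_opt ->
  (n_alg T tau p (1 - alpha)^-1 d <= n_reserved T r_opt)%N.
Proof.
move=> p0 a0 a1 tau1 hopt.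
have [Hn _] := @run_inv _ _ _ _ _ _ _ _ p0 a0 a1 tau1 hopt T (leqnn T).
apply: (leq_trans Hn).
rewrite /Qs /n_reserved big_ltn_cond //=; apply: eq_leq; apply: congr_big_nat => // i /andP[hi _]. exact: hi.
Qed.
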